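(* Let $\lambda\in(0,1)$ and let $C>0$ be a constant. Assume $1<p<\frac{1}{1-\lambda}$ and define $q$ by $\frac{1}{q}=\frac{1}{p}-(1-\lambda)$. Then there is a constant $K$ (independent of $N$ and $f$) such that for all $N\in\mathbb{N}$ and all $f\in\ell^p(\mathbb{Z})$, $$\sup_{0<\alpha\leq CN^{-1/q}\|f\|_p} \alpha^{q}\,\big|\{x\in\mathbb{Z};\ J_{\lambda,N} f(x)>\alpha\}\big| \leq K\|f\|^q_p,$$ where $J_{\lambda,N} f(x)=\sum_{r\leq N,\ r \text{ prime}}\frac{f(x-r)}{r^{\lambda}}\log r$ and $|\cdot|$ denotes cardinality.
   Context: For $f:\mathbb{Z}\to\mathbb{R}$, $\|f\|_p$ denotes the $\ell^p(\mathbb{Z})$-norm. $\log$ is the natural logarithm. *)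

(* Defs.v *)
From HB Require Import structures.
From mathcomp Require Import all_boot all_order all_algebra.
From mathcomp Require Import all_classical all_reals all_analysis.
Set Implicit Arguments. Unset Strict Implicit. Unset Printing Implicit Defensive.
Import Order.TTheory GRing.Theory Num.Theory.
Local Open Scope classical_set_scope.
Local Open Scope ring_scope.

Definition lp_sum (R : realType) (p : R) (f : int -> R) : \bar R :=
  esum [set: int] (fun x => ((`|f x|) `^ p)%:E).

Definition in_lp (R : realType) (p : R) (f : int -> R) : Prop :=
  (lp_sum p f < +oo)%E.

Definition lp_norm (R : realType) (p : R) (f : int -> R) : R :=
  (fine (lp_sum p f)) `^ (p^-1).

Definition J (R : realType) (lam : R) (N : nat) (f : int -> R) (x : int) : R :=
  \sum_(r < N.+1 | prime r) f (x - (r : nat)%:Z) / ((r : nat)%:R `^ lam) * ln (r : nat)%:R.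

(* Main.v *)
Require Import Defs.
From HB Require Import structures.
From mathcomp Require Import all_boot all_order all_algebra.
From mathcomp Require Import all_classical all_reals all_analysis.
From mathcomp Require Import zify ring lra.
Set Implicit Arguments. Unset Strict Implicit. Unset Printing Implicit Defensive.
Import Order.TTheory GRing.Theory Num.Theory.
Local Open Scope classical_set_scope.
Local Open Scope ring_scope.
Lemma prime_ndvd_fact r m : prime r -> (m < r)%N -> ~~ (r %| m`!)%N.
Proof.
move=> pr; elim: m => [|m IH] lt.
  by rewrite fact0 Euclid_dvd1.
rewrite factS Euclid_dvdM // negb_or IH ?(ltnW lt) // andbT.
by rewrite gtnNdvd.
Qed.

Definition Qp (m : nat) := (\prod_(m.+2 <= r < (m.*2).+2 | prime r) r)%N.

Lemma Qp_dvd m : (Qp m %| 'C(m.*2.+1, m))%N.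
Proof.
have e1 : ('C(m.*2.+1, m) * m`! = \prod_(m.+2 <= k < (m.*2).+2) k)%N.
  have := bin_fact (_ : m <= m.*2.+1)%N; rewrite (_ : m.*2.+1 - m = m.+1)%N; last first.
    by rewrite -addnn; lia.
  move=> /(_ ltac:(rewrite -addnn; lia)); rewrite (fact_split (_ : m.+1 <= m.*2.+1)%N); last by rewrite -addnn; lia.
  rewrite mulnA [(_ * m.+1`!)%N]mulnC => /eqP; rewrite eqn_pmul2l ?fact_gt0 //.
  by move/eqP.
have cop : coprime (Qp m) m`!.
  rewrite /Qp big_seq_cond; apply: (big_ind (fun x => coprime x m`!)).
  - exact: coprime1n.
  - by move=> x y hx hy; rewrite coprimeMl hx hy.
  move=> i /andP []; rewrite mem_index_iota => /andP [h1 h2] pi; rewrite prime_coprime //.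
  by apply: prime_ndvd_fact => //; lia.
rewrite -(Gauss_dvdl _ cop) e1.
rewrite (bigID prime) /=; exact: dvdn_mulr.
Qed.

Lemma bin_le4 m : ('C(m.*2.+1, m) <= 4 ^ m)%N.
Proof.
have h := expnDn 1 1 m.*2.+1.
have h2 : ('C(m.*2.+1, m) + 'C(m.*2.+1, m.+1) <= 2 ^ m.*2.+1)%N.
  rewrite (_ : 2 = 1 + 1)%N // h.
  have hm : (m < m.*2.+2)%N by rewrite -addnn; lia.
  have hm1 : (m.+1 < m.*2.+2)%N by rewrite -addnn; lia.
  rewrite (bigD1 (Ordinal hm)) //= (bigD1 (Ordinal hm1)) //=; last by rewrite -val_eqE /= ; lia.
  rewrite !exp1n !muln1 addnA; exact: leq_addr.
have e : 'C(m.*2.+1, m.+1) = 'C(m.*2.+1, m).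
  rewrite -bin_sub; last by rewrite -addnn; lia.
  congr 'C(_, _); rewrite -addnn; lia.
rewrite e addnn expnS -mul2n leq_pmul2l // in h2.
by rewrite (_ : 4 = 2 ^ 2)%N // -expnM mul2n.
Qed.
Section Cheb.
Variable R : realType.

Definition w (lam : R) (r : nat) : R := ((r%:R) `^ lam)^-1 * ln r%:R.
Definition Asum (lam : R) (n : nat) : R := \sum_(0 <= r < n.+1 | prime r) w lam r.

Lemma w_ge0 lam r : (0 < r)%N -> 0 <= w lam r.
Proof.
move=> r0; rewrite /w mulr_ge0 ?invr_ge0 ?powR_ge0 // ln_ge0 // ler1n.
exact r0.
Qed.

Lemma Asum_ge0 lam n : 0 <= Asum lam n.
Proof.
rewrite /Asum big_seq_cond; apply: sumr_ge0 => i /andP [_ pi].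
by apply: w_ge0; exact: prime_gt0.
Qed.

Lemma ln_prod_nat (I : Type) (s : seq I) (P : pred I) (F : I -> nat) :
  (forall i, P i -> (0 < F i)%N) ->
  ln (((\prod_(i <- s | P i) F i)%N)%:R : R) = \sum_(i <- s | P i) ln ((F i)%:R : R).
Proof.
move=> Fp; elim: s => [|a s IH]; first by rewrite !big_nil ln1.
rewrite !big_cons; case: ifP => Pa //.
rewrite natrM lnM ?IH // posrE ltr0n ?Fp //.
apply: (big_ind (fun x => (0 < x)%N)) => //.
  by move=> x y hx hy; rewrite muln_gt0 hx hy.
Qed.

Lemma Asum_step lam m : 0 <= lam ->
  Asum lam m.*2.+1 <= Asum lam m.+1 + ln 4 * (m.+1%:R) `^ (1 - lam).
Proof.
move=> lam0.
rewrite /Asum (big_cat_nat _ (n:=m.+2)) /=; last 2 first.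
- by [].
- by rewrite -addnn; lia.
rewrite lerD2l.
have m1pos : (0 : R) < m.+1%:R by rewrite ltr0n.
apply: (@le_trans _ _ (\sum_(m.+2 <= r < m.*2.+2 | prime r) ((m.+1%:R `^ lam)^-1 * ln r%:R))).
  rewrite big_seq_cond [X in _ <= X]big_seq_cond; apply: ler_sum => i /andP [].
  rewrite mem_index_iota => /andP [h1 h2] pi.
  rewrite /w ler_wpM2r ?ln_ge0 ?ler1n //; first by lia.
  rewrite lef_pV2 ?posrE ?powR_gt0 ?ltr0n //; last by lia.
  by rewrite ge0_ler_powR // ?nnegrE ?ler0n // ler_nat; lia.
rewrite -mulr_sumr -ln_prod_nat; last by move=> i /prime_gt0.
rewrite -/(Qp m).
have Qle : (Qp m <= 4 ^ m)%N.
  apply: leq_trans (bin_le4 m); apply: dvdn_leq; last exact: Qp_dvd.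
  by rewrite bin_gt0 -addnn; lia.
have Qpos : (0 < Qp m)%N.
  rewrite /Qp; apply: (big_ind (fun x => (0 < x)%N)) => //; last by move=> i /prime_gt0.
  by move=> x y hx hy; rewrite muln_gt0 hx hy.
apply: (@le_trans _ _ ((m.+1%:R `^ lam)^-1 * (ln 4 * m.+1%:R))).
  rewrite ler_wpM2l ?invr_ge0 ?powR_ge0 //.
  apply: (@le_trans _ _ (ln (4 ^ m)%N%:R)).
    by rewrite ler_ln ?posrE ?ltr0n ?expn_gt0 // ler_nat.
  rewrite natrX lnXn // -[X in X <= _]mulr_natr ler_pM2l ?ln_gt0 ?ltr1n // ler_nat leqnSn //.
have -> : m.+1%:R `^ (1 - lam) = m.+1%:R / (m.+1%:R `^ lam) :> R.
  by rewrite powRB ?powRr1 ?ler0n // pnatr_eq0 implybT.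
by rewrite mulrCA [_^-1 * _]mulrC.
Qed.

End Cheb.
Section Cheb2.
Variable R : realType.

Lemma AsumS (lam : R) n : Asum lam n.+1 = Asum lam n + (if prime n.+1 then w lam n.+1 else 0).
Proof. by rewrite /Asum big_mkcond big_nat_recr //= -big_mkcond. Qed.

Lemma Asum0 (lam : R) : Asum lam 0 = 0.
Proof. by rewrite /Asum big_mkcond big_nat1. Qed.

Lemma Asum_bound (lam : R) : 0 <= lam -> lam < 1 ->
  exists K0 : R, 0 <= K0 /\ forall n, Asum lam n <= K0 * n%:R `^ (1 - lam).
Proof.
move=> l0 l1.
set c := (3 / 2 : R) `^ (1 - lam).
have c1 : 1 < c.
  have e1 : 0 < 1 - lam by lra.
  have h := @gt0_ltr_powR R (1-lam) e1 1 (3/2).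
  rewrite !nnegrE in h.
  have {}h := h ltac:(lra) ltac:(lra) ltac:(lra).
  by rewrite powR1 in h.
have ln2 : 0 <= ln (2 : R) by rewrite ln_ge0 // ler1n.
have ln4 : 0 <= ln (4 : R) by rewrite ln_ge0 // ler1n.
exists (ln 4 / (c - 1) + ln 2); split.
  by rewrite addr_ge0 // divr_ge0 // subr_ge0 ltW.
set K0 := ln 4 / (c - 1) + ln 2.
have K0ge : ln 4 + K0 <= K0 * c.
  have -> : K0 * c = K0 + K0 * (c - 1) by ring.
  rewrite addrC lerD2l /K0 mulrDl mulfVK; last by rewrite subr_eq0 gt_eqF.
  by rewrite lerDl mulr_ge0 // subr_ge0 ltW.
have K0pos : 0 <= K0 by rewrite addr_ge0 // divr_ge0 // subr_ge0 ltW.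
have pow_mono : forall a b : nat, (a <= b)%N -> a%:R `^ (1 - lam) <= b%:R `^ (1 - lam) :> R.
  move=> a b ab; apply: ge0_ler_powR; rewrite ?nnegrE ?ler0n ?ler_nat //; lra.
elim/ltn_ind => n IH.
case: n IH => [|[|[|n]]] IH.
- by rewrite Asum0 mulr_ge0 ?powR_ge0.
- by rewrite AsumS Asum0 /= add0r mulr_ge0 ?powR_ge0.
- rewrite AsumS AsumS Asum0 /= !add0r.
  apply: (@le_trans _ _ (ln 2)).
    rewrite /w ger_pMl ?ln_gt0 ?ltr1n // invf_le1 ?powR_gt0 ?ltr0n //.
    by rewrite -[X in X <= _](powRr0 2) ler_powR // ler1n.
  apply: (@le_trans _ _ K0); first by rewrite /K0 lerDr divr_ge0 // subr_ge0 ltW.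
  rewrite ler_peMr //.
  by rewrite -[X in X <= _](powRr0 2) ler_powR ?ler1n // subr_ge0 ltW.
- have [odn|evn] := boolP (odd n.+3).
  + have [m en] : exists m, n.+3 = m.*2.+1.
      by exists n.+3./2; rewrite -[LHS]odd_double_half odn add1n.
    have m1 : (1 <= m)%N by lia.
    rewrite en.
    apply: le_trans (Asum_step m l0) _.
    have IHm := IH m.+1 ltac:(rewrite en; lia).
    apply: (@le_trans _ _ ((ln 4 + K0) * m.+1%:R `^ (1 - lam))).
      by rewrite mulrDl [X in X <= _]addrC lerD2l.
    apply: (@le_trans _ _ (K0 * c * m.+1%:R `^ (1 - lam))).
      by rewrite ler_wpM2r ?powR_ge0.
    rewrite -mulrA ler_wpM2l // /c -powRM; last 2 first.
    * lra.
    * by rewrite ler0n.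
    apply: ge0_ler_powR; rewrite ?nnegrE ?ler0n //; first lra.
    have : (1 : R) <= m%:R by rewrite ler1n.
    have e1 : (m.*2.+1)%:R = m%:R * 2 + 1 :> R by rewrite -natr1 -muln2 natrM.
    have e2 : (m.+1)%:R = m%:R + 1 :> R by rewrite natr1.
    rewrite e1 e2; lra.
  + have np : ~~ prime n.+3.
      apply/negP => pn; have := even_prime pn; case=> [//|]; by rewrite (negbTE evn).
    rewrite AsumS (negbTE np) addr0.
    apply: le_trans (IH n.+2 (ltnSn _)) _.
    by rewrite ler_wpM2l // pow_mono.
Qed.

End Cheb2.
Section Jensen.
Variable R : realType.

Lemma conv2 (p t x y : R) : 1 <= p -> 0 <= t -> t <= 1 -> 0 <= x -> 0 <= y ->
  (t*x + (1-t)*y) `^ p <= t * x `^ p + (1-t) * y `^ p.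
Proof.
move=> p1 t0 t1 x0 y0.
have := @convex_powR R p p1 (Itv01 t0 t1) x y.
rewrite !inE /= !in_itv /= !andbT => /(_ x0 y0).
by rewrite !convRE /=.
Qed.

Lemma jstep (p w0 a0 W X Y : R) : 1 <= p -> 0 <= w0 -> 0 <= a0 -> 0 <= W -> 0 <= X -> 0 <= Y ->
  (W = 0 -> X = 0) -> X `^ p <= W `^ (p - 1) * Y ->
  (w0 * a0 + X) `^ p <= (w0 + W) `^ (p - 1) * (w0 * a0 `^ p + Y).
Proof.
move=> p1 w00 a00 W0 X0 Y0 WX IH.
have p0 : 0 < p by lra.
have [e|ne] := eqVneq (w0 + W) 0.
  have w0z : w0 = 0 by lra.
  have Wz : W = 0 by lra.
  rewrite w0z (WX Wz) mul0r addr0 powR0 ?gt_eqF //.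
  by rewrite mulr_ge0 ?powR_ge0 // mul0r add0r.
have Wp : 0 < w0 + W by rewrite lt_neqAle eq_sym ne /=; lra.
have WMY : W * (X / W) `^ p <= Y.
  have [Wz|Wnz] := eqVneq W 0; first by rewrite Wz mul0r.
  have Wpos : 0 < W by rewrite lt_neqAle eq_sym Wnz.
  have h : W `^ (p - 1) * (W * (X / W) `^ p) = X `^ p.
    rewrite mulrA mulrC.
    rewrite (mulrC (W `^ (p - 1))) mulr_powRB1 // -powRM; last 2 first.
    - by rewrite divr_ge0.
    - by [].
    by rewrite divfK.
  by move: IH; rewrite -h ler_pM2l // powR_gt0.
set t := w0 / (w0 + W).
set M := X / W.
have t0 : 0 <= t by rewrite divr_ge0 // ltW.
have t1 : t <= 1 by rewrite /t ler_pdivrMr // mul1r; lra.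
have M0 : 0 <= M by rewrite divr_ge0.
have eq1 : w0 * a0 + X = (w0 + W) * (t * a0 + (1 - t) * M).
  have [Wz|Wnz] := eqVneq W 0.
    rewrite /M /t Wz (WX Wz) !addr0 mul0r mulr0 addr0.
    rewrite mulrA mulrCA divff ?mulr1 //; lra.
  rewrite /t /M; field.
  by rewrite Wnz ne.
have eq2 : (w0 + W) * (t * a0 `^ p + (1 - t) * M `^ p) = w0 * a0 `^ p + W * M `^ p.
  rewrite /t; field; by rewrite ne.
rewrite eq1 powRM; last 2 first.
- exact: ltW.
- by rewrite addr_ge0 // mulr_ge0 // subr_ge0.
apply: (@le_trans _ _ ((w0 + W) `^ p * (t * a0 `^ p + (1 - t) * M `^ p))).
  by rewrite ler_wpM2l ?powR_ge0 // conv2.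
have e3 : (w0 + W) `^ p = (w0 + W) `^ (p - 1) * (w0 + W).
  by rewrite mulrC mulr_powRB1 // ltW.
by rewrite e3 -mulrA eq2 ler_wpM2l ?powR_ge0 // lerD2l.
Qed.

Lemma jensen (p : R) (I : eqType) (s : seq I) (P : pred I) (wt a : I -> R) :
  1 <= p -> (forall i, P i -> 0 <= wt i) -> (forall i, P i -> 0 <= a i) ->
  (\sum_(i <- s | P i) wt i * a i) `^ p <=
  (\sum_(i <- s | P i) wt i) `^ (p - 1) * \sum_(i <- s | P i) wt i * a i `^ p.
Proof.
move=> p1 w0 a0.
have p0 : p != 0 by apply: lt0r_neq0; lra.
elim: s => [|i s IH].
  by rewrite !big_nil mulr0 powR0.
rewrite !big_cons; case: ifP => Pi //.
have Sw : 0 <= \sum_(j <- s | P j) wt j.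
  by rewrite big_seq_cond sumr_ge0 // => j /andP [_ /w0].
have Swa : 0 <= \sum_(j <- s | P j) wt j * a j.
  by rewrite big_seq_cond sumr_ge0 // => j /andP [_ Pj]; rewrite mulr_ge0 ?w0 ?a0.
have Swap : 0 <= \sum_(j <- s | P j) wt j * a j `^ p.
  by rewrite big_seq_cond sumr_ge0 // => j /andP [_ Pj]; rewrite mulr_ge0 ?w0 ?powR_ge0.
have WX : \sum_(j <- s | P j) wt j = 0 -> \sum_(j <- s | P j) wt j * a j = 0.
  move=> /eqP; rewrite psumr_eq0 => [/allP H|j Pj]; last exact: w0.
  rewrite big_seq_cond big1 // => j /andP [js Pj].
  by have /implyP /(_ Pj) /eqP -> := H j js; rewrite mul0r.
exact: (jstep p1 (w0 i Pi) (a0 i Pi) Sw Swa Swap WX IH).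
Qed.

End Jensen.
Section Core.
Variable R : realType.
Local Open Scope ereal_scope.

Lemma lp_sum_ge0 (p : R) f : 0 <= lp_sum p f.
Proof. by apply: esum_ge0 => x _; rewrite lee_fin powR_ge0. Qed.

Lemma lp_fin (p : R) f : in_lp p f -> lp_sum p f \is a fin_num.
Proof. by move=> h; rewrite ge0_fin_numE ?lp_sum_ge0. Qed.

Lemma sum_le_lp (p : R) (f : int -> R) (s : seq int) : in_lp p f -> uniq s ->
  (\sum_(x <- s) `|f x| `^ p <= fine (lp_sum p f))%R.
Proof.
move=> hf us.
rewrite -lee_fin fineK ?lp_fin //.
apply: esum_ge; exists [set` s]; first by rewrite /fsets /=; split.
rewrite fsbig_finite //= sumEFin lee_fin le_eqVlt; apply/orP; left; apply/eqP.
apply: perm_big; apply: uniq_perm => //; first exact: finmap.fset_uniq.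
move=> x; rewrite in_fset_set //.
apply/idP/idP => [h|/set_mem //]; first by apply: mem_set; exact: h.
exact: finite_seq.
Qed.

End Core.
Section Final.
Variable R : realType.

Lemma sum_const_seq (T : Type) (s : seq T) (c : R) : \sum_(x <- s) c = c *+ size s.
Proof. by elim: s => [|a s IH]; rewrite ?big_nil ?big_cons ?IH ?mulr0n ?mulrS. Qed.

Lemma J_bound (lam : R) N f x :
  J lam N f x <= \sum_(r < N.+1 | prime r) w lam r * `|f (x - (r : nat)%:Z)|.
Proof.
rewrite /J; apply: ler_sum => r pr.
apply: (le_trans (ler_norm _)).
have l0 : 0 <= ln ((r : nat)%:R : R) by rewrite ln_ge0 // ler1n prime_gt0.
rewrite !normrM normfV (ger0_norm l0) (ger0_norm (powR_ge0 _ _)).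
rewrite le_eqVlt; apply/orP; left; apply/eqP; rewrite /w; ring.
Qed.

Lemma core (lam p : R) N f alpha (s : seq int) :
  1 <= p -> 0 < alpha -> in_lp p f -> uniq s ->
  (forall x, x \in s -> alpha < J lam N f x) ->
  alpha `^ p * (size s)%:R <=
  (\sum_(r < N.+1 | prime r) w lam r) `^ p * fine (lp_sum p f).
Proof.
move=> p1 a0 hf us hs.
set A := \sum_(r < N.+1 | prime r) w lam r.
set S := fine (lp_sum p f).
have wge : forall r : 'I_N.+1, prime r -> 0 <= w lam r.
  by move=> r pr; apply: w_ge0; exact: prime_gt0.
have A0 : 0 <= A by apply: sumr_ge0.
have step : forall x, x \in s ->
    alpha `^ p <= A `^ (p - 1) * \sum_(r < N.+1 | prime r) w lam r * `|f (x - (r : nat)%:Z)| `^ p.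
  move=> x xs.
  apply: le_trans (jensen _ p1 wge (fun r _ => normr_ge0 _)).
  apply: ge0_ler_powR; rewrite ?nnegrE; first lra.
  - exact: ltW.
  - by apply: sumr_ge0 => r pr; rewrite mulr_ge0 ?wge.
  - by apply: ltW; apply: lt_le_trans (hs x xs) (J_bound _ _ _ _).
rewrite mulr_natr -sum_const_seq.
apply: (@le_trans _ _ (\sum_(x <- s) A `^ (p - 1) *
   \sum_(r < N.+1 | prime r) w lam r * `|f (x - (r : nat)%:Z)| `^ p)).
  by rewrite big_seq [X in _ <= X]big_seq; apply: ler_sum => x xs; exact: step.
rewrite -mulr_sumr exchange_big /=.
apply: (@le_trans _ _ (A `^ (p - 1) * \sum_(r < N.+1 | prime r) w lam r * S)).
  apply: ler_wpM2l; first exact: powR_ge0.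
  apply: ler_sum => r pr; rewrite -mulr_sumr; apply: ler_wpM2l; first exact: wge.
  rewrite -(big_map (fun x => x - (r : nat)%:Z) predT (fun y => `|f y| `^ p)).
  apply: sum_le_lp => //; rewrite map_inj_uniq //; exact: addIr.
rewrite -mulr_suml -/A mulrA; apply: ler_wpM2r.
  by rewrite /S fine_ge0 // lp_sum_ge0.
by rewrite mulrC mulr_powRB1 //; lra.
Qed.

End Final.
Lemma alg (R : realType) (C K0 Nf F p q lam : R) : 0 < C -> 0 <= K0 -> 0 < Nf -> 0 <= F ->
  0 < p -> 0 < q -> q^-1 = p^-1 - (1 - lam) ->
  (C * Nf `^ (- q^-1) * F) `^ (q - p) * ((K0 * Nf `^ (1 - lam)) `^ p * F `^ p)
  = C `^ (q - p) * K0 `^ p * F `^ q.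
Proof.
move=> C0 K00 N0 F0 p0 q0 hq.
rewrite !powRM ?mulr_ge0 ?powR_ge0 ?(ltW C0) ?(ltW N0) //.
rewrite -!powRrM.
have e1 : Nf `^ (- q^-1 * (q - p)) * Nf `^ ((1 - lam) * p) = 1.
  rewrite -powRD; last by apply/implyP => _; rewrite gt_eqF.
  have -> : - q^-1 * (q - p) + (1 - lam) * p = 0.
    have -> : 1 - lam = p^-1 - q^-1 by rewrite hq; ring.
    by field; rewrite !gt_eqF.
  by rewrite powRr0.
have e2 : F `^ (q - p) * F `^ p = F `^ q.
  rewrite -powRD ?subrK //; apply/implyP => /eqP h; exfalso; move: h; rewrite ?subrK; lra.
transitivity (C `^ (q - p) * K0 `^ p * (Nf `^ (- q^-1 * (q - p)) * Nf `^ ((1 - lam) * p))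
   * (F `^ (q - p) * F `^ p)); first by ring.
by rewrite e1 e2 mulr1.
Qed.

Theorem mainTheorem5 (R : realType) (lam C p q : R) :
  0 < lam -> lam < 1 -> 0 < C ->
  1 < p -> p < (1 - lam)^-1 ->
  q^-1 = p^-1 - (1 - lam) ->
  exists K : R, forall (N : nat) (f : int -> R), in_lp p f ->
    forall alpha : R, 0 < alpha ->
      alpha <= C * (N%:R `^ (- q^-1)) * lp_norm p f ->
      ((alpha `^ q)%:E * counting [set x : int | (alpha < J lam N f x)%R]
         <= (K * (lp_norm p f) `^ q)%:E)%E.
Proof.
move=> l0 l1 C0 p1 plam hq.
have p0 : 0 < p by lra.
have lam1 : 0 < 1 - lam by lra.
have hq0 : 0 < q^-1.
  rewrite hq subr_gt0.
  by rewrite -(invrK (1 - lam)) ltf_pV2 ?posrE ?invr_gt0.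
have q0 : 0 < q by rewrite -invr_gt0.
have pq : p < q.
  by rewrite -ltf_pV2 ?posrE // hq ltrBlDr ltrDl.
have [K0 [K00 HK0]] := Asum_bound (ltW l0) l1.
exists (C `^ (q - p) * K0 `^ p).
move=> N f hf alpha a0 ale.
set F := lp_norm p f.
set S := fine (lp_sum p f).
set A := \sum_(r < N.+1 | prime r) w lam r.
have S0 : 0 <= S by rewrite /S fine_ge0 // lp_sum_ge0.
have F0 : 0 <= F by rewrite /F /lp_norm powR_ge0.
have SF : S = F `^ p.
  by rewrite /F /lp_norm -powRrM mulVf ?gt_eqF // powRr1.
have N0 : (0 < N)%N.
  case: N ale {A} => [|N] //.
  rewrite powR0 ?oppr_eq0 ?gt_eqF // mulr0 mul0r => ale; lra.
have Npos : (0 : R) < N%:R by rewrite ltr0n.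
have AN : A = Asum lam N by rewrite /Asum big_mkord.
have A0 : 0 <= A by rewrite AN Asum_ge0.
have hcore : forall s : seq int, uniq s -> (forall x, x \in s -> alpha < J lam N f x) ->
    alpha `^ p * (size s)%:R <= A `^ p * S.
  by move=> s us hs; apply: core => //; lra.
set E := [set x : int | (alpha < J lam N f x)%R].
have ap0 : 0 < alpha `^ p by rewrite powR_gt0.
have finE : finite_set E.
  apply: contrapT => infE.
  have [B BE Bn] := infinite_set_fset (Num.truncn (A `^ p * S / alpha `^ p)).+1 infE.
  have := hcore (finmap.enum_fset B) (finmap.fset_uniq _) (fun x xB => BE x xB).
  rewrite mulrC -ler_pdivlMr //.
  move=> h.
  have h2 : ((Num.truncn (A `^ p * S / alpha `^ p)).+1%:R : R) <= (size (finmap.enum_fset B))%:R by rewrite ler_nat.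
  have := lt_le_trans (truncnS_gt _) (le_trans h2 h).
  by rewrite ltxx.
rewrite /counting asboolT // -EFinM lee_fin.
have memE : forall x, x \in finmap.enum_fset (fset_set E) -> alpha < J lam N f x.
  move=> x xE; have := in_fset_set finE x.
  by rewrite xE => /esym/set_mem.
have hE := hcore _ (finmap.fset_uniq _) memE.
have e : alpha `^ q = alpha `^ (q - p) * alpha `^ p.
  by rewrite -powRD ?subrK //; apply/implyP => _; rewrite gt_eqF.
rewrite e -[X in X <= _]mulrA.
apply: le_trans (ler_wpM2l (powR_ge0 _ _) hE) _.
rewrite SF -(alg C0 K00 Npos F0 p0 q0 hq).
have RHS0 : 0 <= C * N%:R `^ (- q^-1) * F by rewrite mulr_ge0 ?mulr_ge0 ?powR_ge0 // ltW.
apply: ler_pM.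
- exact: powR_ge0.
- by rewrite mulr_ge0 ?powR_ge0.
- apply: ge0_ler_powR; rewrite ?nnegrE //; [lra | exact: ltW].
- apply: ler_wpM2r; first exact: powR_ge0.
  apply: ge0_ler_powR; rewrite ?nnegrE; [lra | exact: A0 | | by rewrite AN HK0].
  by rewrite mulr_ge0 ?powR_ge0.
Qed.
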